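(* $\mathsf{ICM}$ is a variety. It is axiomatized by the axioms of commutative (unital) rings together with the equations $$x\approx x^2x^*,\qquad x\approx x^{**},\qquad (r_p(x))^p\approx(1-p^*p)\,x\quad\text{for every prime }p,$$ where $p$ denotes the term $1+\dots+1$ ($p$ summands).
   Context: The language is $\{+,\cdot,-,0,1,(\,)^*\}\cup\{r_p:p\text{ prime}\}$ with $(\,)^*$ and $r_p$ unary. A field is weakly rooted if it has characteristic $0$, or has prime characteristic $p$ and every element has a $p$-th root. Weak inverse: $a^*=a^{-1}$ if $a\ne0$, $0^*=0$. Weak $p$-root (in a weakly rooted field): $r_p(a)=\sqrt[p]{a}$ if the characteristic is $p$, and $0$ otherwise. An implicitly closed field is a weakly rooted field expanded by $(\,)^*$ and all $r_p$. $\mathsf{ICM}$ is the class of algebras isomorphic to subalgebras of direct products of implicitly closed fields. *)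

(* Defs.v *)
From HB Require Import structures.
From mathcomp Require Import all_boot all_order all_algebra.
Set Implicit Arguments. Unset Strict Implicit. Unset Printing Implicit Defensive.
Import GRing.Theory.
Local Open Scope ring_scope.

(* The root operations are packaged as a nat-indexed family; only the
   components at prime indices are part of the signature (homomorphisms
   and axioms only ever refer to r_p with p prime). *)
Record alg := Alg {
  carrier :> Type;
  a_add : carrier -> carrier -> carrier;
  a_mul : carrier -> carrier -> carrier;
  a_opp : carrier -> carrier;
  a_zero : carrier;
  a_one : carrier;
  a_star : carrier -> carrier;
  a_root : nat -> carrier -> carrier }.

Definition is_hom (A B : alg) (f : A -> B) : Prop :=
  (forall x y, f (a_add x y) = a_add (f x) (f y))
  /\ (forall x y, f (a_mul x y) = a_mul (f x) (f y))
  /\ (forall x, f (a_opp x) = a_opp (f x))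
  /\ f (a_zero A) = a_zero B
  /\ f (a_one A) = a_one B
  /\ (forall x, f (a_star x) = a_star (f x))
  /\ (forall p, prime p -> forall x, f (a_root p x) = a_root p (f x)).

(* Implicitly closed field: a field F with weak p-roots r_p for every prime p:
   r_p x is a p-th root of x when char F = p, and 0 otherwise.  The existence
   of such r is exactly the weakly-rooted condition (a field has characteristic
   0 or a prime).  The weak inverse is MathComp's field inverse (0^-1 = 0). *)
Record icf := ICF {
  icf_F : fieldType;
  icf_r : nat -> icf_F -> icf_F;
  icf_rP : forall p, prime p -> forall x : icf_F,
    if p \in [pchar icf_F] then icf_r p x ^+ p = x else icf_r p x = 0 }.

Definition alg_of_icf (K : icf) : alg :=
  @Alg (icf_F K) +%R *%R (fun x => - x) 0 1 GRing.inv (@icf_r K).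

Definition prod_alg (I : Type) (K : I -> icf) : alg :=
  @Alg (forall i, icf_F (K i))
    (fun f g i => f i + g i)
    (fun f g i => f i * g i)
    (fun f i => - f i)
    (fun i => 0)
    (fun i => 1)
    (fun f i => (f i)^-1)
    (fun p f i => @icf_r (K i) p (f i)).

(* A is in ICM: isomorphic to a subalgebra of a direct product of implicitly
   closed fields, i.e. there is an injective homomorphism into such a product. *)
Definition in_ICM (A : alg) : Prop :=
  exists (I : Type) (K : I -> icf) (f : A -> prod_alg K),
    is_hom f /\ injective f.

Definition a_nat (A : alg) (n : nat) : A :=
  iter n (fun y => a_add y (a_one A)) (a_zero A).
Definition a_pow (A : alg) (x : A) (n : nat) : A :=
  iter n (a_mul x) (a_one A).

Definition comm_ring_axioms (A : alg) : Prop :=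
  (forall x y z : A, a_add x (a_add y z) = a_add (a_add x y) z)
  /\ (forall x y : A, a_add x y = a_add y x)
  /\ (forall x : A, a_add (a_zero A) x = x)
  /\ (forall x : A, a_add (a_opp x) x = a_zero A)
  /\ (forall x y z : A, a_mul x (a_mul y z) = a_mul (a_mul x y) z)
  /\ (forall x y : A, a_mul x y = a_mul y x)
  /\ (forall x : A, a_mul (a_one A) x = x)
  /\ (forall x y z : A, a_mul x (a_add y z) = a_add (a_mul x y) (a_mul x z)).

Definition ICM_axioms (A : alg) : Prop :=
  comm_ring_axioms A
  /\ (forall x : A, x = a_mul (a_mul x x) (a_star x))
  /\ (forall x : A, x = a_star (a_star x))
  /\ (forall p, prime p -> forall x : A,
         a_pow (a_root p x) p =
         a_mul (a_add (a_one A) (a_opp (a_mul (a_star (a_nat A p)) (a_nat A p)))) x).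

(* Main.v *)
From HB Require Import structures.
Require Import Defs.
From mathcomp Require Import all_boot all_order all_algebra.
From mathcomp Require Import boolp classical_sets.
From mathcomp Require Import ring.
Set Implicit Arguments. Unset Strict Implicit. Unset Printing Implicit Defensive.
Import GRing.Theory.
Local Open Scope ring_scope.

Definition RA (A : alg) (H : ICM_axioms A) : Type := carrier A.
HB.instance Definition _ (A : alg) (H : ICM_axioms A) := gen_eqMixin (RA H).
HB.instance Definition _ (A : alg) (H : ICM_axioms A) := gen_choiceMixin (RA H).

Section S.
Variables (A : alg) (H : ICM_axioms A).
Let C := H.1.
Lemma RA_addA : associative (@a_add A). Proof. by move=> x y z; case: C => h _. Qed.
Lemma RA_addC : commutative (@a_add A). Proof. by case: C => _ [h _]. Qed.
Lemma RA_add0 : left_id (a_zero A) (@a_add A). Proof. by case: C => _ [_ [h _]]. Qed.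
Lemma RA_addN : left_inverse (a_zero A) (@a_opp A) (@a_add A). Proof. by case: C => _ [_ [_ [h _]]]. Qed.
Lemma RA_mulA : associative (@a_mul A). Proof. by case: C => _ [_ [_ [_ [h _]]]]. Qed.
Lemma RA_mulC : commutative (@a_mul A). Proof. by case: C => _ [_ [_ [_ [_ [h _]]]]]. Qed.
Lemma RA_mul1 : left_id (a_one A) (@a_mul A). Proof. by case: C => _ [_ [_ [_ [_ [_ [h _]]]]]]. Qed.
Lemma RA_mulDr : right_distributive (@a_mul A) (@a_add A). Proof. by case: C => _ [_ [_ [_ [_ [_ [_ h]]]]]]. Qed.
Lemma RA_mulDl : left_distributive (@a_mul A) (@a_add A).
Proof. by move=> x y z; rewrite RA_mulC RA_mulDr !(RA_mulC z). Qed.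
End S.

HB.instance Definition _ (A : alg) (H : ICM_axioms A) :=
  GRing.isZmodule.Build (RA H) (@RA_addA A H) (@RA_addC A H) (@RA_add0 A H) (@RA_addN A H).
HB.instance Definition _ (A : alg) (H : ICM_axioms A) :=
  GRing.Zmodule_isComPzRing.Build (RA H) (@RA_mulA A H) (@RA_mulC A H) (@RA_mul1 A H) (@RA_mulDl A H).


Section Hard.
Variables (A : alg) (H : ICM_axioms A).
Local Notation R := (RA H).
Local Open Scope classical_set_scope.

Definition st (x : R) : R := a_star x.

Lemma st1 (x : R) : x = x * x * st x. Proof. by have [_ [h _]] := H; apply: h. Qed.
Lemma st2 (x : R) : st (st x) = x. Proof. by have [_ [_ [h _]]] := H; rewrite /st -(h x). Qed.
Lemma st3 (x : R) : st x = st x * st x * x.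
Proof. by have := st1 (st x); rewrite st2. Qed.
Lemma idem (x : R) : (x * st x) * (x * st x) = x * st x.
Proof. by rewrite mulrA -(mulrA x) -(mulrA x) [st x * x]mulrC !mulrA -st1. Qed.

Lemma anat n : a_nat A n = (n%:R : R).
Proof.
elim: n => [|n IH] //.
have -> : a_nat A n.+1 = (a_nat A n : R) + 1 by [].
by rewrite IH mulrSr.
Qed.
Lemma apow (x : R) n : a_pow x n = x ^+ n.
Proof.
elim: n => [|n IH] //.
have -> : a_pow x n.+1 = x * a_pow x n by [].
by rewrite IH exprS.
Qed.
Lemma root_ax p : prime p -> forall x : R,
  (a_root p x : R) ^+ p = (1 - st (p%:R) * p%:R) * x.
Proof. by move=> pp x; have [_ [_ [_ h]]] := H; rewrite -apow h // anat. Qed.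

Definition idl (M : set R) :=
  M 0 /\ (forall x y, M x -> M y -> M (x - y)) /\ (forall r x, M x -> M (r * x)).
Definition good (M : set R) :=
  idl M /\ ~ M 1 /\ (forall a, ~ M a -> M (1 - a * st a)).

Lemma exists_good (z : R) : z != 0 -> exists M, good M /\ ~ M z.
Proof.
move=> nz; set e := z * st z.
have enz : e != 0 by apply: contraNneq nz => he; rewrite (st1 z) -mulrA -/e he mulr0.
pose P (J : set R) := (forall x y, J x -> J y -> J (x - y)) /\
   (forall r x, J x -> J (r * x)) /\ ~ J e.
have [M [[Msub [Mmul Me]] Mmax]] : exists M, P M /\ forall B, M `<` B -> ~ P B.
  apply: Zorn_bigcup => F FP Ftot; split; last split.
  - move=> x y [X FX Xx] [Y FY Yy].
    have [XY|YX] := Ftot _ _ FX FY.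
      by exists Y => //; apply: (FP _ FY).1 => //; apply: XY.
    by exists X => //; apply: (FP _ FX).1 => //; apply: YX.
  - by move=> r x [X FX Xx]; exists X => //; apply: (FP _ FX).2.1.
  - by move=> [X FX Xe]; apply: (FP _ FX).2.2.
have M0 : M 0.
  apply: contrapT => nM0; apply: (Mmax (fun u => M u \/ u = 0)).
    split; first by move=> u Mu; left.
    by move=> /(_ 0 (or_intror erefl)).
  split; last split.
  - move=> x y [Mx|->] [My|->]; rewrite ?subr0 ?sub0r; try by left.
    + by left; apply: Msub.
    + by left; rewrite -mulN1r; apply: Mmul.
    + by right.
  - by move=> r x [Mx|->]; [left; apply: Mmul | right; rewrite mulr0].
  - by move=> [//|/eqP]; rewrite (negbTE enz).
have Madd x y : M x -> M y -> M (x + y).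
  by move=> Mx My; rewrite -(opprK y); apply: Msub => //; rewrite -mulN1r; apply: Mmul.
have ext t : ~ M t -> exists r, M (e - r * t).
  move=> nMt; apply: contrapT => nB.
  apply: (Mmax (fun u => exists r, M (u - r * t))).
    split; first by move=> u Mu; exists 0; rewrite mul0r subr0.
    by move=> BM; apply: nMt; apply: BM; exists 1; rewrite mul1r subrr.
  split; last split.
  - move=> x y [r Mr] [s Ms]; exists (r - s).
    by rewrite (_ : _ - _ = (x - r * t) - (y - s * t)); [apply: Msub | ring].
  - move=> r' x [r Mr]; exists (r' * r).
    by rewrite (_ : _ - _ = r' * (x - r * t)); [apply: Mmul | ring].
  - exact: nB.
exists M; split; last first.
  by move=> Mz; apply: Me; rewrite /e mulrC; apply: Mmul.
split; first by [].
split.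
  by move=> M1; apply: Me; rewrite -(mulr1 e); apply: Mmul.
move=> a nMa; apply: contrapT => nM1f; set f := a * st a.
have nMf : ~ M f by move=> Mf; apply: nMa; rewrite (st1 a) -mulrA; apply: Mmul.
have [r Mr] := ext _ nMf; have [s Ms] := ext _ nM1f.
apply: Me.
have -> : e = e * (e - s * (1 - f)) + s * (1 - f) * (e - r * f).
  transitivity (e * e - r * s * (f - f * f)); last by ring.
  by rewrite /e /f !idem subrr mulr0 subr0.
by apply: Madd; apply: Mmul.
Qed.

Definition gidx := {M : set R | good M}.

Section Quot.
Variable m : gidx.
Let M := sval m.
Let hM : good M := svalP m.
Lemma M0 : M 0. Proof. exact: hM.1.1. Qed.
Lemma Msub x y : M x -> M y -> M (x - y). Proof. exact: hM.1.2.1. Qed.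
Lemma Mmul r x : M x -> M (r * x). Proof. exact: hM.1.2.2. Qed.
Lemma M1 : ~ M 1. Proof. exact: hM.2.1. Qed.
Lemma Minv a : ~ M a -> M (1 - a * st a). Proof. exact: hM.2.2. Qed.
Lemma Mopp x : M x -> M (- x). Proof. by move=> Mx; rewrite -mulN1r; apply: Mmul. Qed.
Lemma Madd x y : M x -> M y -> M (x + y).
Proof. by move=> Mx My; rewrite -(opprK y); apply: Msub => //; apply: Mopp. Qed.
Lemma Meq x y : x = y -> M x -> M y. Proof. by move=> ->. Qed.

Definition rep (x : R) : R :=
  xchoose (ex_intro (fun y => `[< M (y - x) >]) x (asboolT (Meq (esym (subrr x)) M0))).
Lemma repP x : M (rep x - x).
Proof. rewrite /rep; set E := ex_intro _ _ _; exact: (asboolW (xchooseP E)). Qed.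
Lemma rep_eq x y : M (x - y) -> rep x = rep y.
Proof.
move=> Mxy; apply: eq_xchoose => u; apply: asbool_equiv_eq; split => h.
  by apply: (Meq _ (Madd h Mxy)); ring.
by apply: (Meq _ (Msub h Mxy)); ring.
Qed.
Lemma rep_idem x : rep (rep x) == rep x.
Proof. by apply/eqP/rep_eq/repP. Qed.

Definition Q := {x : R | rep x == x}.
HB.instance Definition _ := Choice.copy Q {x : R | rep x == x}.
HB.instance Definition _ := SubType.copy Q {x : R | rep x == x}.

Definition pi (x : R) : Q := exist _ (rep x) (rep_idem x).
Lemma val_pi x : M (sval (pi x) - x). Proof. exact: repP. Qed.
Lemma piP x y : pi x = pi y <-> M (x - y).
Proof.
split; last by move=> h; apply: val_inj; rewrite /= (rep_eq h).
move=> e; have : sval (pi x) = sval (pi y) by rewrite e.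
move=> /= exy; apply: (Meq _ (Msub (repP y) (repP x))); rewrite exy; ring.
Qed.
Lemma pi_val (q : Q) : pi (sval q) = q.
Proof. by apply: val_inj => /=; apply/eqP; case: q. Qed.
Lemma piW (P : Q -> Prop) : (forall x, P (pi x)) -> forall q, P q.
Proof. by move=> h q; rewrite -(pi_val q). Qed.
Lemma pi_compat x y : M (x - y) -> pi x = pi y. Proof. by move/piP. Qed.

Definition qadd (a b : Q) := pi (sval a + sval b).
Definition qopp (a : Q) := pi (- sval a).
Definition qmul (a b : Q) := pi (sval a * sval b).
Lemma qaddE x y : qadd (pi x) (pi y) = pi (x + y).
Proof.
apply: pi_compat; apply: (Meq _ (Madd (val_pi x) (val_pi y))); ring.
Qed.
Lemma qoppE x : qopp (pi x) = pi (- x).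
Proof. apply: pi_compat; apply: (Meq _ (Mopp (val_pi x))); ring. Qed.
Lemma qmulE x y : qmul (pi x) (pi y) = pi (x * y).
Proof.
apply: pi_compat.
apply: (Meq _ (Madd (Mmul (sval (pi y)) (val_pi x)) (Mmul x (val_pi y)))); ring.
Qed.

Lemma qaddA : associative qadd.
Proof. by elim/piW => x; elim/piW => y; elim/piW => z; rewrite !qaddE addrA. Qed.
Lemma qaddC : commutative qadd.
Proof. by elim/piW => x; elim/piW => y; rewrite !qaddE addrC. Qed.
Lemma qadd0 : left_id (pi 0) qadd.
Proof. by elim/piW => x; rewrite !qaddE add0r. Qed.
Lemma qaddN : left_inverse (pi 0) qopp qadd.
Proof. by elim/piW => x; rewrite qoppE qaddE addNr. Qed.
HB.instance Definition _ := GRing.isZmodule.Build Q qaddA qaddC qadd0 qaddN.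

Lemma qmulA : associative qmul.
Proof. by elim/piW => x; elim/piW => y; elim/piW => z; rewrite !qmulE mulrA. Qed.
Lemma qmulC : commutative qmul.
Proof. by elim/piW => x; elim/piW => y; rewrite !qmulE mulrC. Qed.
Lemma qmul1 : left_id (pi 1) qmul.
Proof. by elim/piW => x; rewrite !qmulE mul1r. Qed.
Lemma qmulDl : left_distributive qmul (+%R : Q -> Q -> Q).
Proof.
by elim/piW => x; elim/piW => y; elim/piW => z; rewrite /GRing.add /= !(qmulE, qaddE) mulrDl.
Qed.
Lemma qone_neq0 : pi 1 != (0 : Q).
Proof. by apply/eqP => /piP; rewrite subr0; apply: M1. Qed.
HB.instance Definition _ :=
  GRing.Zmodule_isComNzRing.Build Q qmulA qmulC qmul1 qmulDl qone_neq0.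

Definition qinv (a : Q) := pi (st (sval a)).
Lemma piE x y : (pi x = pi y) = M (x - y).
Proof. by apply: propext; apply: piP. Qed.
Lemma pi0 x : (pi x == 0) = `[< M x >].
Proof.
apply/eqP/asboolP; first by move/piP; rewrite subr0.
by move=> h; apply/piP; rewrite subr0.
Qed.
Lemma qmulVf (q : Q) : q != 0 -> qinv q * q = 1.
Proof.
rewrite -(pi_val q) pi0 => /asboolPn nM.
rewrite /qinv pi_val /GRing.mul /= -{2}(pi_val q) qmulE.
apply/piP; rewrite mulrC; apply: (Meq _ (Mopp (Minv nM))); ring.
Qed.
Lemma qinv0 : qinv 0 = 0.
Proof.
apply/eqP; rewrite pi0; apply/asboolP.
have h : M (sval (0 : Q)) by apply: (Meq _ (val_pi 0)); rewrite subr0.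
by rewrite st3; apply: Mmul.
Qed.
HB.instance Definition _ := GRing.ComNzRing_isField.Build Q qmulVf qinv0.

Lemma pi_add x y : pi (x + y) = pi x + pi y. Proof. by rewrite /GRing.add /= qaddE. Qed.
Lemma pi_mul x y : pi (x * y) = pi x * pi y. Proof. by rewrite /GRing.mul /= qmulE. Qed.
Lemma pi_opp x : pi (- x) = - pi x. Proof. by rewrite /GRing.opp /= qoppE. Qed.
Lemma pi_0 : pi 0 = 0. Proof. by []. Qed.
Lemma pi_1 : pi 1 = 1. Proof. by []. Qed.
Lemma pi_nat n : pi n%:R = n%:R.
Proof. by elim: n => [|n IH] //; rewrite !mulrSr pi_add IH. Qed.
Lemma pi_exp x n : pi (x ^+ n) = pi x ^+ n.
Proof. by elim: n => [|n IH] //; rewrite !exprS pi_mul IH. Qed.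
Lemma pi_st x : pi (st x) = (pi x)^-1.
Proof.
have [Mx|nMx] := pselect (M x).
  have -> : pi x = 0 by apply/piP; rewrite subr0.
  by rewrite invr0; apply/piP; rewrite subr0 st3; apply: Mmul.
have h : pi (st x) * pi x = 1.
  by rewrite -pi_mul; apply/piP; rewrite mulrC; apply: (Meq _ (Mopp (Minv nMx))); ring.
have nz : pi x != 0 by rewrite pi0; apply/asboolPn.
by rewrite -[pi (st x)](mulfK nz) h mul1r.
Qed.

Lemma powroot p (pp : prime p) x :
  pi (a_root p x) ^+ p = (1 - (p%:R)^-1 * p%:R) * pi x.
Proof. by rewrite -pi_exp root_ax // pi_mul pi_add pi_opp pi_mul pi_st pi_nat. Qed.

Lemma root_compat p (pp : prime p) x y : M (x - y) -> pi (a_root p x) = pi (a_root p y).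
Proof.
move=> /piP exy; have hx := powroot pp x; have hy := powroot pp y.
have [p0|pn0] := eqVneq (p%:R : Q) 0.
  have hc : p \in [pchar Q] by rewrite inE /= pp p0 eqxx.
  rewrite p0 mulr0 subr0 mul1r in hx hy.
  apply/eqP; rewrite -subr_eq0; have := expf_eq0 (pi (a_root p x) - pi (a_root p y)) p.
  rewrite prime_gt0 //= => <-; apply/eqP.
  have := pFrobenius_autB_comm hc (mulrC (pi (a_root p x)) (pi (a_root p y))).
  by rewrite !pFrobenius_autE => ->; rewrite hx hy exy ?mul1r subrr.
have z (u : Q) : u ^+ p = 0 -> u = 0 by move/eqP; rewrite expf_eq0 prime_gt0 //= => /eqP.
rewrite mulVf // subrr !mul0r in hx hy.
by rewrite (z _ hx) (z _ hy).
Qed.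

Definition rq p (q : Q) : Q := pi (a_root p (sval q)).
Lemma rqP p : prime p -> forall q : Q,
  if p \in [pchar Q] then rq p q ^+ p = q else rq p q = 0.
Proof.
move=> pp q; rewrite /rq powroot // pi_val.
case: ifP => hc; first by rewrite (pcharf0 hc) mulr0 subr0 mul1r.
have nz : (p%:R : Q) != 0 by apply/negP=> /eqP h; move: hc; rewrite inE /= pp h eqxx.
have := powroot pp (sval q); rewrite mulVf // subrr mul0r.
by move/eqP; rewrite expf_eq0 prime_gt0 //= => /eqP.
Qed.

Definition Qicf : icf := @ICF Q rq rqP.

End Quot.

Lemma pi_inj (x y : R) : (forall m : gidx, pi m x = pi m y) -> x = y.
Proof.
move=> h; apply/eqP; rewrite -subr_eq0; apply/negPn/negP => nz.
have [M [gM nMz]] := exists_good nz.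
by apply: nMz; have /piP := h (exist _ M gM).
Qed.

End Hard.

Lemma hard (A : alg) (H : ICM_axioms A) : in_ICM A.
Proof.
pose K := fun m : gidx H => Qicf m.
pose f := fun (x : A) => (fun m : gidx H => pi m x) : prod_alg K.
have fe := @functional_extensionality_dep.
exists (gidx H), K, f; split; last first.
  by move=> x y exy; apply: (@pi_inj A H) => m; have := congr1 (fun g => g m) exy.
split; first by move=> x y; apply: fe => m; exact: (@pi_add A H m x y).
split; first by move=> x y; apply: fe => m; exact: (@pi_mul A H m x y).
split; first by move=> x; apply: fe => m; exact: (@pi_opp A H m x).
split; first by apply: fe.
split; first by apply: fe.
split; first by move=> x; apply: fe => m; exact: (@pi_st A H m x).
move=> p pp x; apply: fe => m; rewrite /f /= /rq.
apply: root_compat => //; rewrite -opprB; apply: Mopp; apply: val_pi.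
Qed.
Lemma hom_nat (A B : alg) (f : A -> B) : is_hom f -> forall n, f (a_nat A n) = a_nat B n.
Proof.
case=> hadd [hmul [hopp [h0 [h1 _]]]]; elim=> [|n IH] /=; first exact: h0.
by rewrite /a_nat /= hadd -/(a_nat A n) IH h1.
Qed.

Lemma hom_pow (A B : alg) (f : A -> B) : is_hom f -> forall x n, f (a_pow x n) = a_pow (f x) n.
Proof.
case=> hadd [hmul [hopp [h0 [h1 _]]]] x; elim=> [|n IH] /=; first exact: h1.
by rewrite /a_pow /= hmul -/(a_pow x n) IH.
Qed.

Lemma transfer (A B : alg) (f : A -> B) : is_hom f -> injective f ->
  ICM_axioms B -> ICM_axioms A.
Proof.
move=> hf finj.
have hN := hom_nat hf; have hP := hom_pow hf.
case: hf => hadd [hmul [hopp [h0 [h1 [hs hr]]]]].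
case=> [[aA [aC [a0 [aN [mA [mC [m1 mD]]]]]]] [ax1 [ax2 ax3]]].
split; first split.
  by move=> x y z; apply: finj; rewrite !hadd aA.
split; first by move=> x y; apply: finj; rewrite !hadd aC.
split; first by move=> x; apply: finj; rewrite !hadd h0 a0.
split; first by move=> x; apply: finj; rewrite !hadd hopp h0 aN.
split; first by move=> x y z; apply: finj; rewrite !hmul mA.
split; first by move=> x y; apply: finj; rewrite !hmul mC.
split; first by move=> x; apply: finj; rewrite !hmul h1 m1.
  by move=> x y z; apply: finj; rewrite !(hmul, hadd) mD.
split; first by move=> x; apply: finj; rewrite !(hmul, hs) -ax1.
split; first by move=> x; apply: finj; rewrite !hs -ax2.
move=> p pp x; apply: finj; rewrite hP hr // !(hmul, hadd, hopp, hs, h1, hN).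
exact: ax3.
Qed.

Lemma prod_nat (I : Type) (K : I -> icf) n : a_nat (prod_alg K) n = fun i => n%:R.
Proof.
elim: n => [|n IH] //.
have -> : a_nat (prod_alg K) n.+1 = a_add (a_nat (prod_alg K) n) (a_one _) by [].
rewrite IH.
by apply: functional_extensionality_dep => i; rewrite mulrSr.
Qed.

Lemma prod_pow (I : Type) (K : I -> icf) (x : prod_alg K) n :
  a_pow x n = fun i => (x i) ^+ n.
Proof.
elim: n => [|n IH] //.
have -> : a_pow x n.+1 = a_mul x (a_pow x n) by [].
rewrite IH.
by apply: functional_extensionality_dep => i; rewrite exprS.
Qed.

Lemma prod_axioms (I : Type) (K : I -> icf) : ICM_axioms (prod_alg K).
Proof.
have fe := @functional_extensionality_dep.
split; first split.
  by move=> x y z; apply: fe => i /=; rewrite addrA.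
split; first by move=> x y; apply: fe => i /=; rewrite addrC.
split; first by move=> x; apply: fe => i /=; rewrite add0r.
split; first by move=> x; apply: fe => i /=; rewrite addNr.
split; first by move=> x y z; apply: fe => i /=; rewrite mulrA.
split; first by move=> x y; apply: fe => i /=; rewrite mulrC.
split; first by move=> x; apply: fe => i /=; rewrite mul1r.
  by move=> x y z; apply: fe => i /=; rewrite mulrDr.
split.
  move=> x; apply: fe => i /=; have [->|nz] := eqVneq (x i) 0; first by rewrite !mul0r.
  by rewrite mulfK.
split; first by move=> x; apply: fe => i /=; rewrite invrK.
move=> p pp x; rewrite prod_pow prod_nat; apply: fe => i /=.
have := icf_rP pp (x i); case: ifP => hc.
  move=> ->; rewrite (pcharf0 hc).
  by rewrite mulr0 subr0 mul1r.
move=> ->; have nz : (p%:R : icf_F (K i)) != 0 by apply/negP=> /eqP h; move: hc; rewrite inE /= pp h eqxx.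
by rewrite mulVf // subrr mul0r expr0n /= (gtn_eqF (prime_gt0 pp)).
Qed.

Lemma easy (A : alg) : in_ICM A -> ICM_axioms A.
Proof. by case=> I [K [f [hf fi]]]; apply: transfer hf fi (prod_axioms K). Qed.

Theorem mainTheorem5 : forall A : alg, in_ICM A <-> ICM_axioms A.
Proof. by move=> A; split; [exact: easy | exact: hard]. Qed.
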